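(* Let $\mathcal X$ be a non-empty finite set, $\mathcal A_x$ non-empty finite sets, $\mathcal Z=\{(x,a):x\in\mathcal X,a\in\mathcal A_x\}$, $P(x,a,\cdot)$ probability measures on $\mathcal X$, $S(x,a,y,\cdot)$ probability measures on $\mathbb R$ with finite second moments, and $\gamma\in[0,1)$. For a function $\varepsilon:\mathcal X\to[0,1]$, a function $q:\mathcal Z\to\mathbb R$ and $x\in\mathcal X$, define the probability measure $\pi^\varepsilon_q(x,\cdot)$ on $\mathcal A_x$ by $$\pi^\varepsilon_q(x,a)=\frac{\varepsilon(x)}{|\mathcal A_x|}+\mathbf 1_{\{a\in\arg\max q(x,\cdot)\}}\frac{1-\varepsilon(x)}{|\arg\max q(x,\cdot)|},$$ and define $\mathcal H(\varepsilon,q):\mathcal Z\to\mathbb R$ by $\mathcal H(\varepsilon,q)(x,a)=Q_{\pi^\varepsilon_q}(x,a)$. Then $\mathcal H(\varepsilon,q)(x,a)\le Q^*(x,a)$ for all $(x,a)\in\mathcal Z$ and $$\|\mathcal H(\varepsilon,q)-Q^*\|_\infty\le\frac{\gamma}{1-\gamma}\Big(\|Q^*-q\|_\infty+\|(q-Q^* )_+\|_\infty+2\|Q^*\|_\infty\|\varepsilon\|_\infty\Big),$$ where $(q-Q^* )_+(x,a)=\max\{q(x,a)-Q^*(x,a),0\}$ and $\|\cdot\|_\infty$ denotes the max norm.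
   Context: For an SM policy $\pi$ (a family of probability measures $\pi(x,\cdot)$ on $\mathcal A_x$) and $x\in\mathcal X$: $X_0=x$, $A_t\sim\pi(X_t,\cdot)$, $X_{t+1}\sim P(X_t,A_t,\cdot)$ given the past, and conditionally on the state-action process the rewards $R_{t+1}\sim S(X_t,A_t,X_{t+1},\cdot)$ are independent; $V_\pi(x)=\mathbb E_{x,\pi}[\sum_{t\ge0}\gamma^tR_{t+1}]$. General (history-dependent) policies $\Pi$ are defined analogously with $A_t$ drawn from $\Pi_t(H_t,\cdot)$, $H_t=(X_0,A_0,\dots,X_t)$, and $V^*(x)=\sup_\Pi V_\Pi(x)$. Let $g(x,a,y)=\int z\,S(x,a,y,dz)$, $r(x,a)=\sum_yP(x,a,y)g(x,a,y)$, $Q_\pi(x,a)=r(x,a)+\gamma\sum_yP(x,a,y)V_\pi(y)$ and $Q^*(x,a)=r(x,a)+\gamma\sum_yP(x,a,y)V^*(y)$. *)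

(* Defs.v *)
From HB Require Import structures.
From mathcomp Require Import all_boot all_order all_algebra.
From mathcomp Require Import all_classical all_reals all_analysis.
Set Implicit Arguments. Unset Strict Implicit. Unset Printing Implicit Defensive.
Import Order.TTheory GRing.Theory Num.Theory.
Import numFieldNormedType.Exports.
Local Open Scope classical_set_scope.
Local Open Scope ring_scope.

Section MDP.
Variables (R : realType) (X Act : finType) (A : X -> {set Act}).
Variables (P : X -> Act -> X -> R) (g : X -> Act -> X -> R) (gamma : R).

Definition mean_reward (S : X -> Act -> X -> probability R R) (x : X) (a : Act)
  (y : X) : R := fine (\int[S x a y]_z (z%:E))%E.

(* General (history-dependent) policies: Pi t h x a is the probability of
   action a at time t given history H_t = (X_0,A_0,...,X_{t-1},A_{t-1},X_t),
   encoded as the list h = [(X_0,A_0);...;(X_{t-1},A_{t-1})] and x = X_t. *)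
Definition gpolicy := nat -> seq (X * Act) -> X -> Act -> R.

Definition is_gpolicy (Pi : gpolicy) : Prop :=
  forall t h x, [/\ forall a, 0 <= Pi t h x a,
                    forall a, a \notin A x -> Pi t h x a = 0 &
                    \sum_(a : Act) Pi t h x a = 1].

Definition is_smpolicy (pi : X -> Act -> R) : Prop :=
  forall x, [/\ forall a, 0 <= pi x a,
                forall a, a \notin A x -> pi x a = 0 &
                \sum_(a : Act) pi x a = 1].

Definition gpolicy_of_sm (pi : X -> Act -> R) : gpolicy := fun _ _ x a => pi x a.

(* J n h x = E[ sum_{k = t}^{t+n-1} gamma^(k-t) R_{k+1} | H_t = (h, x) ],
   t = size h; by conditional independence of rewards only the means g matter *)
Fixpoint horizon_value (Pi : gpolicy) (n : nat) (h : seq (X * Act)) (x : X) : R :=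
  match n with
  | 0 => 0
  | n'.+1 => \sum_(a : Act) Pi (size h) h x a *
       \sum_(y : X) P x a y * (g x a y + gamma * horizon_value Pi n' (rcons h (x, a)) y)
  end.

(* V_Pi(x) = E_{x,Pi}[sum_t gamma^t R_{t+1}] = lim_n E_{x,Pi}[sum_{t<n} gamma^t R_{t+1}] *)
Definition value (Pi : gpolicy) (x : X) : R :=
  limn (fun n => horizon_value Pi n [::] x).

Definition Vstar (x : X) : R :=
  sup [set value Pi x | Pi in [set Pi | is_gpolicy Pi]].

Definition rew (x : X) (a : Act) : R := \sum_(y : X) P x a y * g x a y.

Definition Qpol (pi : X -> Act -> R) (x : X) (a : Act) : R :=
  rew x a + gamma * \sum_(y : X) P x a y * value (gpolicy_of_sm pi) y.

Definition Qstar (x : X) (a : Act) : R :=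
  rew x a + gamma * \sum_(y : X) P x a y * Vstar y.

Definition argmaxA (q : X -> Act -> R) (x : X) : {set Act} :=
  [set a in A x | [forall b in A x, q x b <= q x a]].

Definition eps_greedy (eps : X -> R) (q : X -> Act -> R) (x : X) (a : Act) : R :=
  (a \in A x)%:R * (eps x / #|A x|%:R
     + (a \in argmaxA q x)%:R * ((1 - eps x) / #|argmaxA q x|%:R)).

Definition Hop (eps : X -> R) (q : X -> Act -> R) : X -> Act -> R :=
  Qpol (eps_greedy eps q).

Definition supZ (f : X -> Act -> R) : R :=
  \big[Num.max/0]_(p : X * Act | p.2 \in A p.1) `|f p.1 p.2|.

Definition supX (f : X -> R) : R := \big[Num.max/0]_(x : X) `|f x|.

End MDP.

(* Main.v *)
Require Import Defs.
From HB Require Import structures.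
From mathcomp Require Import all_boot all_order all_algebra.
From mathcomp Require Import all_classical all_reals all_analysis.
From mathcomp Require Import ring lra.
Import Order.TTheory GRing.Theory Num.Theory.
Import numFieldNormedType.Exports.
Local Open Scope classical_set_scope.
Local Open Scope ring_scope.
Section Aux.
Variable R : realType.

Lemma avg_le (I : finType) (w f : I -> R) c : (forall i, 0 <= w i) ->
  \sum_i w i = 1 -> (forall i, w i != 0 -> f i <= c) -> \sum_i w i * f i <= c.
Proof.
move=> w0 w1 hf; apply: (@le_trans _ _ (\sum_i w i * c)).
  apply: ler_sum => i _; have [->|nz] := eqVneq (w i) 0; first by rewrite !mul0r.
  by rewrite ler_wpM2l // hf.
by rewrite -mulr_suml w1 mul1r.
Qed.

Lemma avg_norm (I : finType) (w f : I -> R) c : (forall i, 0 <= w i) ->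
  \sum_i w i = 1 -> (forall i, w i != 0 -> `|f i| <= c) -> `|\sum_i w i * f i| <= c.
Proof.
move=> w0 w1 hf; rewrite ler_norml; apply/andP; split.
  rewrite lerNl -sumrN; under eq_bigr do rewrite -mulrN.
  apply: avg_le => // i /hf; rewrite ler_norml => /andP[h _]; by rewrite lerNl.
by apply: avg_le => // i /hf; rewrite ler_norml => /andP[_ h].
Qed.

Lemma geom_cvg (u : nat -> R) (G M gamma : R) : 0 <= gamma -> gamma < 1 -> 0 <= G ->
  (forall n, `|u n| <= M) -> (forall n, `|u n.+1 - u n| <= G * gamma ^+ n) -> cvgn u.
Proof.
move=> g0 g1 G0 uM ud.
pose s := series (geometric G gamma).
have hs : cvgn s by apply: is_cvg_geometric_series; rewrite ger0_norm.
have -> : u = (fun n => (u n + s n) - s n) by apply/funext => n; rewrite addrK.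
apply: is_cvgB => //.
apply: nondecreasing_is_cvgn.
  apply/nondecreasing_seqP => n /=. rewrite /s seriesSr /=.
  have := ud n; rewrite ler_norml => /andP[h1 _]; lra.
exists (M + G / (1 - gamma)) => _ [n _ <-].
apply: lerD; first by have := uM n; rewrite ler_norml => /andP[_ ->].
rewrite /s geometric_seriesE ?lt_eqF //=.
rewrite ler_pM2r ?invr_gt0 ?subr_gt0 //.
idtac.
have : 0 <= gamma ^+ n by rewrite exprn_ge0.
nra.
Qed.
End Aux.
Section MDPProof.
Variables (R : realType) (X Act : finType) (A : X -> {set Act}).
Variables (P : X -> Act -> X -> R) (g : X -> Act -> X -> R) (gamma : R).
Hypothesis hP : forall x a, a \in A x -> (forall y, 0 <= P x a y) /\ \sum_(y : X) P x a y = 1.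
Hypothesis g0 : 0 <= gamma.
Hypothesis g1 : gamma < 1.

Local Notation hv := (horizon_value P g gamma).
Local Notation val := (value P g gamma).

Definition Gb : R := \big[Num.max/(0:R)]_(p : X * Act * X | p.1.2 \in A p.1.1) `|g p.1.1 p.1.2 p.2|.

Lemma Gb0 : 0 <= Gb.
Proof. by apply: (big_ind (fun x => 0 <= x)) => // x y hx hy; rewrite le_max hx. Qed.

Lemma Gbg x a y : a \in A x -> `|g x a y| <= Gb.
Proof. by move=> aA; apply: (le_bigmax_cond _ (j := (x, a, y))). Qed.

Definition Mb : R := Gb / (1 - gamma).

Lemma Mb_eq : Gb + gamma * Mb = Mb.
Proof.
have : Gb = Mb * (1 - gamma) by rewrite /Mb divfK // subr_eq0 gt_eqF.
move=> ->; ring.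
Qed.

Lemma Mb0 : 0 <= Mb.
Proof. by rewrite /Mb divr_ge0 ?Gb0 // subr_ge0 ltW. Qed.

Lemma gpol_nz (Pi : gpolicy R X Act) t h x a : is_gpolicy A Pi -> Pi t h x a != 0 -> a \in A x.
Proof.
move=> hPi; apply: contraNT => aA; case: (hPi t h x) => _ /(_ a aA) -> _.
by rewrite eqxx.
Qed.

Lemma inner_norm x a (f : X -> R) c : a \in A x -> (forall y, `|f y| <= c) ->
  `|\sum_y P x a y * f y| <= c.
Proof. by move=> aA hf; case: (hP _ _ aA) => p0 p1; apply: avg_norm. Qed.

Lemma inner_le x a (f : X -> R) c : a \in A x -> (forall y, f y <= c) ->
  \sum_y P x a y * f y <= c.
Proof. by move=> aA hf; case: (hP _ _ aA) => p0 p1; apply: avg_le. Qed.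

Lemma hvS (Pi : gpolicy R X Act) n h x : hv Pi n.+1 h x =
  \sum_a Pi (size h) h x a * \sum_y P x a y * (g x a y + gamma * hv Pi n (rcons h (x, a)) y).
Proof. by []. Qed.

Lemma hv_bound (Pi : gpolicy R X Act) : is_gpolicy A Pi -> forall n h x, `|hv Pi n h x| <= Mb.
Proof.
move=> hPi; elim=> [|n IH] h x /=; first by rewrite normr0 Mb0.
case: (hPi (size h) h x) => w0 _ w1.
apply: avg_norm => // a /(gpol_nz _ _ _ _ _ hPi) aA.
apply: inner_norm => // y.
rewrite -[X in _ <= X]Mb_eq; apply: (le_trans (ler_normD _ _)).
apply: lerD; first exact: Gbg.
by rewrite normrM ger0_norm // ler_wpM2l.
Qed.

Lemma hv_diff (Pi : gpolicy R X Act) : is_gpolicy A Pi -> forall n h x,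
  `|hv Pi n.+1 h x - hv Pi n h x| <= Gb * gamma ^+ n.
Proof.
move=> hPi; elim=> [|n IH] h x.
  rewrite /= subr0 expr0 mulr1.
  case: (hPi (size h) h x) => w0 _ w1.
  apply: avg_norm => // a /(gpol_nz _ _ _ _ _ hPi) aA.
  apply: inner_norm => // y.
  by rewrite mulr0 addr0 Gbg.
rewrite (hvS Pi n.+1 h x) (hvS Pi n h x).
rewrite -sumrB; under eq_bigr do rewrite -mulrBr -sumrB.
case: (hPi (size h) h x) => w0 _ w1.
apply: avg_norm => // a /(gpol_nz _ _ _ _ _ hPi) aA.
have e : forall u v w : R, (u + v) - (u + w) = v - w by move=> *; ring.
under eq_bigr do rewrite -mulrBr e -mulrBr.
apply: inner_norm => // y.
rewrite normrM ger0_norm // exprS mulrCA ler_wpM2l //.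
Qed.

Lemma hv_cvg (Pi : gpolicy R X Act) h x : is_gpolicy A Pi -> cvgn (fun n => hv Pi n h x).
Proof.
move=> hPi; apply: (@geom_cvg _ _ Gb Mb gamma) => //.
- exact: Gb0.
- by move=> n; apply: hv_bound.
- by move=> n; apply: hv_diff.
Qed.


Definition shiftP (Pi : gpolicy R X Act) (p : X * Act) : gpolicy R X Act :=
  fun t h => Pi t.+1 (p :: h).

Lemma shiftP_gpol Pi p : is_gpolicy A Pi -> is_gpolicy A (shiftP Pi p).
Proof. by move=> hPi t h x; apply: hPi. Qed.

Lemma hv_shift (Pi : gpolicy R X Act) p n h x : hv Pi n (p :: h) x = hv (shiftP Pi p) n h x.
Proof.
elim: n h x => // n IH h x; rewrite !hvS /=.
by apply: eq_bigr => a _; congr (_ * _); apply: eq_bigr => y _; rewrite IH.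
Qed.

Lemma val_le (Pi : gpolicy R X Act) x : is_gpolicy A Pi -> val Pi x <= Mb.
Proof.
move=> hPi; apply: limr_le; first exact: hv_cvg.
apply: nearW => n; have := hv_bound Pi hPi n [::] x; rewrite ler_norml => /andP[_ ->] //.
Qed.

Lemma cvg_avg (I J : finType) (w : I -> R) (p : I -> J -> R) (c : I -> J -> R)
  (v : I -> J -> nat -> R) (l : I -> J -> R) :
  (forall i j, v i j n @[n --> \oo] --> l i j) ->
  (\sum_i w i * \sum_j p i j * (c i j + gamma * v i j n)) @[n --> \oo] -->
  \sum_i w i * \sum_j p i j * (c i j + gamma * l i j).
Proof.
move=> hv.
apply: cvg_big => [|i _]; first exact: add_continuous.
apply: cvgM; first exact: cvg_cst.
apply: cvg_big => [|j _]; first exact: add_continuous.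
apply: cvgM; first exact: cvg_cst.
apply: cvgD; first exact: cvg_cst.
apply: cvgM; first exact: cvg_cst.
exact: hv.
Qed.

Lemma val_step (Pi : gpolicy R X Act) x : is_gpolicy A Pi ->
  val Pi x = \sum_a Pi 0%N [::] x a *
     \sum_y P x a y * (g x a y + gamma * val (shiftP Pi (x, a)) y).
Proof.
move=> hPi.
have HC : (fun n => hv Pi n.+1 [::] x) @ \oo --> \sum_a Pi 0%N [::] x a *
     \sum_y P x a y * (g x a y + gamma * val (shiftP Pi (x, a)) y).
  have -> : (fun n => hv Pi n.+1 [::] x) = (fun n => \sum_a Pi 0%N [::] x a *
     \sum_y P x a y * (g x a y + gamma * hv (shiftP Pi (x, a)) n [::] y)).
    apply/funext => n; rewrite hvS; apply: eq_bigr => a _; congr (_ * _).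
    by apply: eq_bigr => y _; rewrite -hv_shift.
  apply: (@cvg_avg Act X (Pi 0%N [::] x) (P x) (g x) (fun a y n => hv (shiftP Pi (x, a)) n [::] y)) => a y.
  by apply: hv_cvg; apply: shiftP_gpol.
have HC' := HC; rewrite (cvg_shiftS (fun n => hv Pi n [::] x)) in HC'.
exact: cvg_lim HC'.
Qed.


Lemma val_le_Vstar (Pi : gpolicy R X Act) x : is_gpolicy A Pi -> val Pi x <= Vstar A P g gamma x.
Proof.
move=> hPi; apply: ub_le_sup; last by exists Pi.
by exists Mb => _ [Pi' hPi' <-]; apply: val_le.
Qed.

Lemma Vstar_le x c : (exists Pi : gpolicy R X Act, is_gpolicy A Pi) ->
  (forall Pi : gpolicy R X Act, is_gpolicy A Pi -> val Pi x <= c) -> Vstar A P g gamma x <= c.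
Proof.
move=> [Pi0 h0] hc; apply: ge_sup; first by exists (val Pi0 x), Pi0.
by move=> _ [Pi hPi <-]; apply: hc.
Qed.

Lemma rewE (V : X -> R) x a : rew P g x a + gamma * \sum_y P x a y * V y =
  \sum_y P x a y * (g x a y + gamma * V y).
Proof. by rewrite /rew mulr_sumr -big_split; apply: eq_bigr => y _ /=; ring. Qed.

Lemma sm_gpol (pi : X -> Act -> R) : is_smpolicy A pi -> is_gpolicy A (gpolicy_of_sm pi).
Proof. by move=> h t hh x; apply: h. Qed.

Lemma sup_ge0 (f : X -> Act -> R) : 0 <= supZ A f.
Proof. by apply: (big_ind (fun x => 0 <= x)) => // x y hx hy; rewrite le_max hx. Qed.

Lemma supX_ge0 (f : X -> R) : 0 <= supX f.
Proof. by apply: (big_ind (fun x => 0 <= x)) => // x y hx hy; rewrite le_max hx. Qed.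

Lemma supZ_ge (f : X -> Act -> R) x a : a \in A x -> f x a <= supZ A f.
Proof.
move=> aA; apply: le_trans (ler_norm _) _.
by apply: (le_bigmax_cond _ (j := (x, a))).
Qed.

Lemma supZ_geN (f : X -> Act -> R) x a : a \in A x -> - f x a <= supZ A f.
Proof.
move=> aA; apply: le_trans (ler_norm _) _; rewrite normrN.
by apply: (le_bigmax_cond _ (j := (x, a))).
Qed.

Lemma supX_ge (f : X -> R) x : f x <= supX f.
Proof. by apply: le_trans (ler_norm _) _; apply: (le_bigmax _ _ x). Qed.

Lemma unif_sum (S : {set Act}) : (exists a, a \in S) ->
  \sum_a (a \in S)%:R / #|S|%:R = 1 :> R.
Proof.
move=> [a aS]; rewrite -mulr_suml.
have -> : \sum_b ((b \in S)%:R : R) = #|S|%:R.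
  transitivity (\sum_(b in S) (1 : R)); last by rewrite sumr_const.
  by rewrite [RHS]big_mkcond; apply: eq_bigr => b _; case: (b \in S).
have : (0 < #|S|)%N by apply/card_gt0P; exists a.
by move=> h; rewrite mulfV // pnatr_eq0 -lt0n.
Qed.

Lemma unif_ge0 (S : {set Act}) a : 0 <= (a \in S)%:R / #|S|%:R :> R.
Proof. by rewrite divr_ge0 ?ler0n. Qed.
Variables (eps : X -> R) (q : X -> Act -> R).
Hypothesis hA : forall x, exists a : Act, a \in A x.
Hypothesis he : forall x, 0 <= eps x <= 1.

Local Notation pi := (eps_greedy A eps q).
Local Notation uA x a := ((a \in A x)%:R / #|A x|%:R).
Local Notation uM x a := ((a \in argmaxA A q x)%:R / #|argmaxA A q x|%:R).

Lemma argmax_sub x a : a \in argmaxA A q x -> a \in A x.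
Proof. by rewrite inE => /andP[]. Qed.

Lemma argmax_ne x : exists a, a \in argmaxA A q x.
Proof.
have [a0 a0A] := hA x.
case: (@arg_maxP _ _ _ a0 [pred i | i \in A x] (q x) a0A) => b bA bmax.
exists b; rewrite inE; apply/andP; split; first exact: bA. apply/forallP => c; apply/implyP => cA; exact: bmax.
Qed.

Lemma pi_dec x a : pi x a = eps x * uA x a + (1 - eps x) * uM x a.
Proof.
rewrite /eps_greedy; case aA: (a \in A x); case aM: (a \in argmaxA A q x) => /=.
- by ring.
- by ring.
- by move: (argmax_sub x a aM); rewrite aA.
- by ring.
Qed.

Lemma pi_sum x (f : Act -> R) : \sum_a pi x a * f a =
  eps x * \sum_a uA x a * f a + (1 - eps x) * \sum_a uM x a * f a.
Proof. rewrite !mulr_sumr -big_split; apply: eq_bigr => a _ /=; rewrite pi_dec; ring. Qed.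

Lemma pi_sm : is_smpolicy A pi.
Proof.
move=> x; split.
- move=> a; rewrite pi_dec; have := he x => /andP[e0 e1].
  by rewrite addr_ge0 // mulr_ge0 ?unif_ge0 // subr_ge0.
- by move=> a aA; rewrite /eps_greedy (negbTE aA) mul0r.
- have := pi_sum x (fun _ => 1); under eq_bigr do rewrite mulr1.
  move=> ->; under eq_bigr do rewrite mulr1; under [X in _ + _ * X]eq_bigr do rewrite mulr1.
  by rewrite (unif_sum _ (hA x)) (unif_sum _ (argmax_ne x)); ring.
Qed.

Local Notation Vp := (val (gpolicy_of_sm pi)).
Local Notation Vs := (Vstar A P g gamma).
Local Notation H := (Hop A P g gamma eps q).
Local Notation Qs := (Qstar A P g gamma).

Lemma Vp_bell x : Vp x = \sum_a pi x a * H x a.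
Proof.
rewrite val_step; last exact: sm_gpol pi_sm.
by apply: eq_bigr => a _; rewrite /Hop /Qpol rewE.
Qed.

Lemma Vp_le x : Vp x <= Vs x.
Proof. by apply: val_le_Vstar; apply: sm_gpol pi_sm. Qed.

Lemma QmH x a : Qs x a - H x a = gamma * \sum_y P x a y * (Vs y - Vp y).
Proof.
rewrite /Qstar /Hop /Qpol.
have -> : \sum_y P x a y * (Vs y - Vp y) = \sum_y P x a y * Vs y - \sum_y P x a y * Vp y.
  by rewrite -sumrB; apply: eq_bigr => y _; rewrite mulrBr.
ring.
Qed.

Local Notation D := (supX (fun y => Vs y - Vp y)).

Lemma inner_D x a : a \in A x -> 0 <= \sum_y P x a y * (Vs y - Vp y) <= D.
Proof.
move=> aA; apply/andP; split.
  apply: sumr_ge0 => y _; apply: mulr_ge0; first by case: (hP _ _ aA) => ->.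
  by rewrite subr_ge0 Vp_le.
by apply: inner_le => // y; apply: supX_ge (fun y => Vs y - Vp y) y.
Qed.
Local Notation C1 := (supZ A (fun x a => Qs x a - q x a)).
Local Notation C2 := (supZ A (fun x a => Num.max (q x a - Qs x a) 0)).
Local Notation SQ := (supZ A Qs).
Local Notation E := (supX eps).

Lemma key x : Vs x - Vp x <= C1 + C2 + 2 * SQ * E + gamma * D.
Proof.
have [a0 a0A] := hA x.
case: (@arg_maxP _ _ _ a0 [pred i | i \in A x] (Qs x) a0A) => bb asA asmax.
have Vs_le : Vs x <= Qs x bb.
  apply: Vstar_le; first by exists (gpolicy_of_sm pi); apply: sm_gpol pi_sm.
  move=> Pi hPi; rewrite val_step //; case: (hPi 0%N [::] x) => w0 _ w1.
  apply: avg_le => // a /(gpol_nz _ _ _ _ _ hPi) aA.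
  apply: le_trans (asmax a aA); rewrite /Qstar rewE.
  apply: ler_sum => y _; apply: ler_wpM2l; first by case: (hP _ _ aA) => ->.
  rewrite lerD2l ler_wpM2l //; apply: val_le_Vstar; exact: shiftP_gpol.
have pis : \sum_a pi x a = 1 by case: (pi_sm x).
have -> : Vp x = Qs x bb - \sum_a pi x a * (Qs x bb - H x a).
  rewrite Vp_bell; under [X in _ = _ - X]eq_bigr do rewrite mulrBr.
  by rewrite sumrB -mulr_suml pis mul1r opprB addrC subrK.
rewrite pi_sum.
have hD a : a \in A x -> Qs x a - H x a <= gamma * D.
  by move=> aA; rewrite QmH ler_wpM2l //; case/andP: (inner_D x a aA).
have hQ c : c \in A x -> `|Qs x c| <= SQ.
  by move=> cA; apply: (le_bigmax_cond _ (j := (x, c))).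
have B1 : \sum_a uA x a * (Qs x bb - H x a) <= 2 * SQ + gamma * D.
  apply: avg_le; [by move=> a; apply: unif_ge0 | exact: unif_sum | ].
  move=> a; case aA: (a \in A x); last by rewrite mul0r eqxx.
  move=> _; have := hD a aA; have := hQ a aA; have := hQ bb asA.
  rewrite !ler_norml => /andP[h1 h2] /andP[h3 h4]; lra.
have B2 : \sum_a uM x a * (Qs x bb - H x a) <= C1 + C2 + gamma * D.
  apply: avg_le; [by move=> a; apply: unif_ge0 | exact: unif_sum (argmax_ne x) | ].
  move=> a; case aM: (a \in argmaxA A q x); last by rewrite mul0r eqxx.
  move=> _; have aA := argmax_sub x a aM.
  have hq : q x bb <= q x a.
    by move: aM; rewrite inE => /andP[_ /forallP /(_ bb) /implyP /(_ asA)].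
  have := hD a aA.
  have h1 := supZ_ge (fun x a => Qs x a - q x a) x bb asA.
  have h2 := supZ_ge (fun x a => Num.max (q x a - Qs x a) 0) x a aA.
  have h3 : q x a - Qs x a <= Num.max (q x a - Qs x a) 0 by rewrite le_max lexx.
  move: h1 h2 h3 => /= h1 h2 h3; lra.
have := he x => /andP[e0 e1].
have eE : eps x <= E by apply: supX_ge eps x.
have SQ0 := sup_ge0 Qs.
have C10 := sup_ge0 (fun x a => Qs x a - q x a).
have C20 := sup_ge0 (fun x a => Num.max (q x a - Qs x a) 0).
have D0 := supX_ge0 (fun y => Vs y - Vp y).
have k1 := ler_wpM2l e0 B1.
have k2 : (1 - eps x) * (\sum_a uM x a * (Qs x bb - H x a)) <= (1 - eps x) * (C1 + C2 + gamma * D).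
  by apply: ler_wpM2l => //; rewrite subr_ge0.
have k3 : eps x * SQ <= E * SQ by rewrite ler_wpM2r.
have k4 : (1 - eps x) * (C1 + C2) <= C1 + C2.
  by rewrite ler_piMl ?addr_ge0 // ?subr_ge0 // lerBlDr lerDl.
nra.
Qed.
Lemma main_res :
  (forall x a, a \in A x -> H x a <= Qs x a) /\
  supZ A (fun x a => H x a - Qs x a)
    <= gamma / (1 - gamma) *
       (supZ A (fun x a => Qs x a - q x a)
        + supZ A (fun x a => Num.max (q x a - Qs x a) 0)
        + 2 * supZ A Qs * supX eps).
Proof.
have SQ0 := sup_ge0 Qs.
have C10 := sup_ge0 (fun x a => Qs x a - q x a).
have C20 := sup_ge0 (fun x a => Num.max (q x a - Qs x a) 0).
have E0 := supX_ge0 eps.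
have D0 := supX_ge0 (fun y => Vs y - Vp y).
have C0 : 0 <= C1 + C2 + 2 * SQ * E.
  by rewrite !addr_ge0 // !mulr_ge0.
have hDD : D <= C1 + C2 + 2 * SQ * E + gamma * D.
  apply: bigmax_le; first by rewrite addr_ge0 // mulr_ge0.
  by move=> y _; rewrite ger0_norm ?subr_ge0 ?Vp_le // key.
have g1' : 0 < 1 - gamma by rewrite subr_gt0.
have hD : D <= (C1 + C2 + 2 * SQ * E) / (1 - gamma).
  rewrite ler_pdivlMr //; nra.
split.
  by move=> x a aA; rewrite -subr_ge0 QmH mulr_ge0 //; case/andP: (inner_D x a aA).
apply: bigmax_le; first by rewrite mulr_ge0 // divr_ge0 // ltW.
move=> [x a] /= aA.
rewrite distrC QmH ger0_norm; last by rewrite mulr_ge0 //; case/andP: (inner_D x a aA).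
apply: (@le_trans _ _ (gamma * D)).
  by rewrite ler_wpM2l //; case/andP: (inner_D x a aA).
by rewrite mulrAC -mulrA ler_wpM2l.
Qed.

End MDPProof.

Theorem lemma3p1 (R : realType) (X Act : finType) (A : X -> {set Act})
  (P : X -> Act -> X -> R) (S : X -> Act -> X -> probability R R) (gamma : R)
  (eps : X -> R) (q : X -> Act -> R) :
  (exists x0 : X, True) ->
  (forall x, exists a : Act, a \in A x) ->
  (forall x a, a \in A x -> (forall y, 0 <= P x a y) /\ \sum_(y : X) P x a y = 1) ->
  (forall x a y, a \in A x ->
     (S x a y).-integrable setT (fun z : R => (z ^+ 2)%:E)) ->
  0 <= gamma -> gamma < 1 ->
  (forall x, 0 <= eps x <= 1) ->
  let g := mean_reward S in
  let H := Hop A P g gamma eps q in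
  let Qs := Qstar A P g gamma in
  (forall x a, a \in A x -> H x a <= Qs x a) /\
  supZ A (fun x a => H x a - Qs x a)
    <= gamma / (1 - gamma) *
       (supZ A (fun x a => Qs x a - q x a)
        + supZ A (fun x a => Num.max (q x a - Qs x a) 0)
        + 2 * supZ A Qs * supX eps).
Proof.
move=> _ hA hP _ g0 g1 he g H Qs.
exact: (@main_res R X Act A P g gamma hP g0 g1 eps q hA he).
Qed.
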